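(* Assume each $L_r:Lip_d(I)\to Lip_d(I)$ ($r\in\mathbb{N}$) is linear and that there is a linear operator $L$ on $Lip_d(I)$ with $\|Lf\|_\infty=\sup_{r\in\mathbb{N}}\|L_rf\|_\infty$ for all $f\in Lip_d(I)$. Then the non-stationary fractal operator $\mathfrak{F}^\alpha_b:Lip_d(I)\to C(I)$, $\mathfrak{F}^\alpha_b(f)=f^\alpha_b$, is relatively Lipschitz with respect to $L$: for all $f,g\in Lip_d(I)$, $$\|\mathfrak{F}^\alpha_b(f)-\mathfrak{F}^\alpha_b(g)\|_\infty\le\frac{1}{1-\|\alpha\|_\infty}\|f-g\|_\infty+\frac{\|\alpha\|_\infty}{1-\|\alpha\|_\infty}\|Lf-Lg\|_\infty,$$ so the $L$-Lipschitz constant of $\mathfrak{F}^\alpha_b$ does not exceed $\frac{\|\alpha\|_\infty}{1-\|\alpha\|_\infty}$.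
   Context: Setting: $I=[x_0,x_N]$ with partition $\Delta: x_0<x_1<\dots<x_N$, $I_i=[x_{i-1},x_i]$, $l_i:I\to I_i$ the increasing affine bijection $l_i(x)=\frac{x_i-x_{i-1}}{x_N-x_0}x+\frac{x_Nx_{i-1}-x_0x_i}{x_N-x_0}$, and $Q_i=l_i^{-1}$. Scaling functions $\alpha_{i,r}:I\to\mathbb{R}$ ($i=1,\dots,N$, $r\in\mathbb{N}$) are continuous with $\|\alpha\|_\infty:=\sup_{r}\max_i\|\alpha_{i,r}\|_\infty<1$. $Lip_d(I)$ ($0<d\le1$) is the space of real functions $g$ on $I$ with $\sup_{x\ne y}|g(x)-g(y)|/|x-y|^d<\infty$, regarded as a subset of $C(I)$ with the supremum norm. $L_r$ satisfy $(L_rg)(x_0)=g(x_0)$, $(L_rg)(x_N)=g(x_N)$ and $\sup_r\|L_r\|_\infty<\infty$ (operator norms w.r.t. the sup norm). An operator $\mathcal{T}_1$ is relatively Lipschitz w.r.t. $\mathcal{T}_2$ if $\|\mathcal{T}_1u-\mathcal{T}_1v\|\le M_1\|u-v\|+M_2\|\mathcal{T}_2u-\mathcal{T}_2v\|$ for some $M_1,M_2\ge0$ and all $u,v$; the infimum of such $M_2$ is the $\mathcal{T}_2$-Lipschitz constant. Non-stationary $\alpha$-fractal function: for $f\in C(I)$ and base functions $b_r\in C(I)$ with $b_r(x_0)=f(x_0)$, $b_r(x_N)=f(x_N)$, $\sup_r\|b_r\|_\infty<\infty$, let $C_f(I)=\{g\in C(I):g(x_0)=f(x_0),g(x_N)=f(x_N)\}$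 and $T^{\alpha_r}:C_f(I)\to C_f(I)$, $(T^{\alpha_r}g)(x)=f(x)+\alpha_{i,r}(Q_i(x))(g-b_r)(Q_i(x))$ for $x\in I_i$. For every $g\in C_f(I)$, $T^{\alpha_1}\circ\cdots\circ T^{\alpha_r}g$ converges uniformly to a function independent of $g$; this is the non-stationary $\alpha$-fractal function. $f^\alpha_b$ denotes it for $f\in Lip_d(I)$ with $b_r=L_rf$. *)

(* Defs.v *)
From Stdlib Require Import Reals List.
From Coquelicot Require Import Coquelicot.
Open Scope R_scope.

Definition inI (a b x : R) : Prop := a <= x <= b.

Definition cont_on (a b : R) (h : R -> R) : Prop :=
  forall x, inI a b x -> forall eps, 0 < eps ->
    exists delta, 0 < delta /\
      forall y, inI a b y -> Rabs (y - x) < delta -> Rabs (h y - h x) < eps.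

(* Supremum norm on I: sup_{x in I} |h x| (as a real; finite for h in C(I)). *)
Definition supn (a b : R) (h : R -> R) : R :=
  real (Lub_Rbar (fun y => exists x, inI a b x /\ y = Rabs (h x))).

Definition Lip (d a b : R) (g : R -> R) : Prop :=
  exists K, forall x y, inI a b x -> inI a b y -> x <> y ->
    Rabs (g x - g y) <= K * Rpower (Rabs (x - y)) d.

Definition is_partition (xs : nat -> R) (N : nat) : Prop :=
  (1 <= N)%nat /\ forall i, (i < N)%nat -> xs i < xs (S i).

(* Q_i = l_i^{-1} : I_i -> I, the inverse of the increasing affine map
   l_i(x) = (x_i - x_{i-1})/(x_N - x_0) x + (x_N x_{i-1} - x_0 x_i)/(x_N - x_0). *)
Definition Qmap (xs : nat -> R) (N i : nat) (x : R) : R :=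
  (xs N - xs 0%nat) / (xs i - xs (pred i)) * (x - xs (pred i)) + xs 0%nat.

(* Index i in {1..N} of a subinterval I_i = [x_{i-1}, x_i] containing x:
   the least i in {1..N-1} with x <= x_i, and N otherwise. *)
Fixpoint first_le (xs : nat -> R) (x : R) (i fuel : nat) : nat :=
  match fuel with
  | O => i
  | S f => if Rle_dec x (xs i) then i else first_le xs x (S i) f
  end.
Definition seg (xs : nat -> R) (N : nat) (x : R) : nat :=
  first_le xs x 1%nat (pred N).

(* The map T^{alpha_r}:
   (T g)(x) = f(x) + alpha_{i,r}(Q_i x) * (g - b_r)(Q_i x)  for x in I_i.
   alpha : nat (i) -> nat (r) -> R -> R. *)
Definition Tmap (xs : nat -> R) (N : nat) (alpha : nat -> nat -> R -> R)
  (f : R -> R) (b : nat -> R -> R) (r : nat) (g : R -> R) : R -> R :=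
  fun x => let i := seg xs N x in
    f x + alpha i r (Qmap xs N i x) * (g (Qmap xs N i x) - b r (Qmap xs N i x)).

(* Iterated composition T^{alpha_{r_0}} o ... o T^{alpha_{r_0+n-1}} applied to g,
   the maps being indexed by nat: the paper's r = 1, 2, ... is our index
   0, 1, ... (index n stands for the paper's r = n+1). *)
Fixpoint Tcomp (xs : nat -> R) (N : nat) (alpha : nat -> nat -> R -> R)
  (f : R -> R) (b : nat -> R -> R) (n : nat) (g : R -> R) : R -> R :=
  match n with
  | O => g
  | S m => Tcomp xs N alpha f b m (Tmap xs N alpha f b m g)
  end.

Definition Cf (a b : R) (f g : R -> R) : Prop :=
  cont_on a b g /\ g a = f a /\ g b = f b.

Definition is_ns_fractal (xs : nat -> R) (N : nat) (alpha : nat -> nat -> R -> R)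
  (f : R -> R) (b : nat -> R -> R) (phi : R -> R) : Prop :=
  forall g, Cf (xs 0%nat) (xs N) f g ->
    forall eps, 0 < eps -> exists M : nat, forall n, (M <= n)%nat ->
      forall x, inI (xs 0%nat) (xs N) x ->
        Rabs (Tcomp xs N alpha f b n g x - phi x) < eps.

(* max_{i=1..N} F i  (all values are >= 0 here, so 0 is a neutral seed). *)
Definition maxi (N : nat) (F : nat -> R) : R :=
  fold_right Rmax 0 (map F (seq 1 N)).

(* The set {max_i ||alpha_{i,r}||_oo : r}, whose supremum is ||alpha||_oo. *)
Definition alpha_norm_bar (xs : nat -> R) (N : nat) (alpha : nat -> nat -> R -> R) : Rbar :=
  Lub_Rbar (fun y => exists r : nat,
    y = maxi N (fun i => supn (xs 0%nat) (xs N) (alpha i r))).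
Definition alpha_norm (xs : nat -> R) (N : nat) (alpha : nat -> nat -> R -> R) : R :=
  real (alpha_norm_bar xs N alpha).

(* Main.v *)
Require Import Defs.
From Stdlib Require Import Reals List Lra Psatz Lia.
From Coquelicot Require Import Coquelicot.
Open Scope R_scope.

Definition bnd (a b : R) (h : R -> R) := exists M, forall x, inI a b x -> Rabs (h x) <= M.

Lemma supn_ub a b h x : bnd a b h -> inI a b x -> Rabs (h x) <= supn a b h.
Proof.
  intros [M HM] Hx. unfold supn.
  destruct (Lub_Rbar_correct (fun y => exists x, inI a b x /\ y = Rabs (h x))) as [Hub Hl].
  assert (H1 := Hub (Rabs (h x)) (ex_intro _ x (conj Hx eq_refl))).
  assert (H2 : Rbar_le (Lub_Rbar (fun y => exists x, inI a b x /\ y = Rabs (h x))) M).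
  { apply Hl. intros y [z [Hz ->]]. simpl. apply HM; auto. }
  destruct (Lub_Rbar _); simpl in *; tauto.
Qed.

Lemma supn_le a b h C : 0 <= C -> (forall x, inI a b x -> Rabs (h x) <= C) -> supn a b h <= C.
Proof.
  intros HC HM. unfold supn.
  destruct (Lub_Rbar_correct (fun y => exists x, inI a b x /\ y = Rabs (h x))) as [Hub Hl].
  assert (H2 : Rbar_le (Lub_Rbar (fun y => exists x, inI a b x /\ y = Rabs (h x))) C).
  { apply Hl. intros y [z [Hz ->]]. simpl. apply HM; auto. }
  destruct (Lub_Rbar _); simpl in *; try tauto; lra.
Qed.

Lemma supn_ge0 a b h : a <= b -> 0 <= supn a b h.
Proof.
  intros Hab. unfold supn.
  destruct (Lub_Rbar_correct (fun y => exists x, inI a b x /\ y = Rabs (h x))) as [Hub Hl].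
  assert (Ha : inI a b a) by (unfold inI; lra).
  assert (H1 := Hub (Rabs (h a)) (ex_intro _ a (conj Ha eq_refl))).
  destruct (Lub_Rbar _); simpl in *; try lra.
  pose proof (Rabs_pos (h a)); lra.
Qed.

Lemma lip_bnd d a b h : 0 < d -> a <= b -> Lip d a b h -> bnd a b h.
Proof.
  intros Hd Hab [K HK]. exists (Rabs (h a) + Rabs K * Rpower (b - a) d).
  intros x Hx. unfold inI in Hx.
  assert (P0 : 0 <= Rabs K * Rpower (b - a) d).
  { apply Rmult_le_pos. apply Rabs_pos. unfold Rpower. left; apply exp_pos. }
  destruct (Req_dec x a) as [->|Hne]. lra.
  assert (Ha : inI a b a) by (unfold inI; lra).
  assert (H := HK x a ltac:(unfold inI; lra) Ha Hne).
  assert (Hp : Rpower (Rabs (x - a)) d <= Rpower (b - a) d).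
  { apply Rle_Rpower_l. lra. split. apply Rabs_pos_lt. lra.
    rewrite Rabs_right; lra. }
  assert (Hpp : 0 < Rpower (Rabs (x - a)) d) by (unfold Rpower; apply exp_pos).
  assert (K * Rpower (Rabs (x - a)) d <= Rabs K * Rpower (b - a) d).
  { apply Rle_trans with (Rabs K * Rpower (Rabs (x - a)) d).
    apply Rmult_le_compat_r; [lra| apply Rle_abs].
    apply Rmult_le_compat_l; [apply Rabs_pos| lra]. }
  replace (h x) with (h a + (h x - h a)) by ring.
  eapply Rle_trans. apply Rabs_triang. lra.
Qed.

Lemma lip_comb d a b f g : Lip d a b f -> Lip d a b g -> Lip d a b (fun y => -1 * g y + f y).
Proof.
  intros [K1 H1] [K2 H2]. exists (K1 + K2). intros x y Hx Hy Hne.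
  specialize (H1 x y Hx Hy Hne). specialize (H2 x y Hx Hy Hne).
  replace (-1 * g x + f x - (-1 * g y + f y)) with ((f x - f y) + - (g x - g y)) by ring.
  eapply Rle_trans. apply Rabs_triang. rewrite Rabs_Ropp. lra.
Qed.

Lemma fold_max_ub (F : nat -> R) l i : In i l -> F i <= fold_right Rmax 0 (map F l).
Proof.
  induction l as [|j l IH]; simpl. tauto.
  intros [->|Hi]. apply Rmax_l. eapply Rle_trans. apply IH; auto. apply Rmax_r.
Qed.

Lemma first_le_spec xs x fuel : forall i, (1 <= i)%nat -> xs (pred i) <= x -> x <= xs (i + fuel)%nat ->
  let j := first_le xs x i fuel in (i <= j <= i + fuel)%nat /\ xs (pred j) <= x <= xs j.
Proof.
  induction fuel as [|f IH]; intros i Hi H1 H2; simpl.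
  - rewrite Nat.add_0_r in H2. split. lia. auto.
  - destruct (Rle_dec x (xs i)) as [Hle|Hnle].
    + split. lia. auto.
    + destruct (IH (S i)) as [A B]. lia. simpl. lra.
      replace (S i + f)%nat with (i + S f)%nat by lia. auto.
      split. lia. auto.
Qed.

Lemma part_mono xs N : is_partition xs N -> forall k, (1 <= k <= N)%nat -> xs 0%nat < xs k.
Proof.
  intros [HN Hp]. induction k as [|k IH]; intros Hk. lia.
  destruct (Nat.eq_dec k 0) as [->|Hk0]. apply Hp; lia.
  eapply Rlt_trans. apply IH; lia. apply Hp; lia.
Qed.

Lemma seg_spec xs N x : is_partition xs N -> inI (xs 0%nat) (xs N) x ->
  (1 <= seg xs N x <= N)%nat /\ xs (pred (seg xs N x)) <= x <= xs (seg xs N x).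
Proof.
  intros Hp Hx. pose proof (proj1 Hp) as HN. unfold seg, inI in *.
  destruct (first_le_spec xs x (pred N) 1%nat) as [A B]. lia. simpl; lra.
  replace (1 + pred N)%nat with N by lia. lra.
  split. lia. auto.
Qed.

Lemma Q_in xs N x : is_partition xs N -> inI (xs 0%nat) (xs N) x ->
  inI (xs 0%nat) (xs N) (Qmap xs N (seg xs N x) x).
Proof.
  intros Hp Hx. destruct (seg_spec xs N x Hp Hx) as [A B].
  set (j := seg xs N x) in *.
  assert (Hw : xs (pred j) < xs j).
  { replace j with (S (pred j)) at 2 by lia. apply (proj2 Hp). lia. }
  assert (HN : xs 0%nat < xs N) by (apply (part_mono xs N Hp); lia).
  set (t := (x - xs (pred j)) / (xs j - xs (pred j))).
  assert (Ht : 0 <= t <= 1).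
  { unfold t. split. apply Rmult_le_pos. lra. left; apply Rinv_0_lt_compat; lra.
    apply Rmult_le_reg_r with (xs j - xs (pred j)). lra.
    unfold Rdiv. rewrite Rmult_assoc, Rinv_l by lra. lra. }
  unfold Qmap. replace ((xs N - xs 0%nat) / (xs j - xs (pred j)) * (x - xs (pred j)) + xs 0%nat)
   with ((xs N - xs 0%nat) * t + xs 0%nat) by (unfold t; field; lra).
  unfold inI. nra.
Qed.

Lemma cont_bnd a b h : a <= b -> cont_on a b h -> bnd a b h.
Proof.
  intros Hab Hc.
  set (cl := fun x => Rmax a (Rmin b x)).
  assert (Hcl : forall x, inI a b x -> cl x = x).
  { intros x [H1 H2]. unfold cl, Rmax, Rmin. destruct (Rle_dec b x); destruct (Rle_dec a _); lra. }
  assert (HclI : forall x, inI a b (cl x)).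
  { intros x. unfold cl, inI, Rmax, Rmin. destruct (Rle_dec b x); destruct (Rle_dec a _); lra. }
  assert (Hcl1 : forall x c, inI a b c -> Rabs (cl x - c) <= Rabs (x - c)).
  { intros x c [H1 H2]. unfold cl, Rmax, Rmin.
    destruct (Rle_dec b x); destruct (Rle_dec a _); unfold Rabs;
    repeat destruct Rcase_abs; lra. }
  destruct (continuity_ab_maj (fun x => Rabs (h (cl x))) a b Hab) as [Mx [HM _]].
  { intros c Hc'. intros eps Heps.
    destruct (Hc c Hc' eps Heps) as [del [Hdel Hd]].
    exists del. split. auto. intros x [_ Hx]. simpl in *. unfold R_dist in *.
    rewrite (Hcl c Hc').
    eapply Rle_lt_trans. apply Rabs_triang_inv2. apply Hd. apply HclI.
    eapply Rle_lt_trans. apply Hcl1; auto. auto. }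
  exists (Rabs (h (cl Mx))). intros x Hx. rewrite <- (Hcl x Hx) at 1. apply HM; auto.
Qed.

Lemma bnd_sub a b f g : bnd a b f -> bnd a b g -> bnd a b (fun x => f x - g x).
Proof.
  intros [M1 H1] [M2 H2]. exists (M1 + M2). intros x Hx.
  eapply Rle_trans. apply Rabs_triang. rewrite Rabs_Ropp.
  specialize (H1 x Hx); specialize (H2 x Hx); lra.
Qed.

Definition interp (a b : R) (f : R -> R) := fun x => f a + (f b - f a) / (b - a) * (x - a).

Lemma interp_Cf a b f : a < b -> Cf a b f (interp a b f).
Proof.
  intros Hab. unfold Cf, interp. split; [|split].
  - intros x _ eps Heps. set (s := (f b - f a) / (b - a)).
    exists (eps / (Rabs s + 1)). split.
    apply Rdiv_lt_0_compat; [lra| pose proof (Rabs_pos s); lra].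
    intros y _ Hy.
    replace (f a + s * (y - a) - (f a + s * (x - a))) with (s * (y - x)) by ring.
    rewrite Rabs_mult. pose proof (Rabs_pos s).
    assert (Rabs (y - x) * (Rabs s + 1) < eps).
    { apply Rmult_lt_reg_r with (/ (Rabs s + 1)). apply Rinv_0_lt_compat; lra.
      rewrite Rmult_assoc, Rinv_r by lra. lra. }
    pose proof (Rabs_pos (y - x)). nra.
  - ring.
  - field. lra.
Qed.

Lemma interp_diff a b f g D x : a < b -> inI a b x -> Rabs (f a - g a) <= D -> Rabs (f b - g b) <= D ->
  Rabs (interp a b f x - interp a b g x) <= D.
Proof.
  intros Hab Hx H1 H2. unfold interp, inI in *.
  set (t := (x - a) / (b - a)).
  assert (Ht : 0 <= t <= 1).
  { unfold t. split. apply Rmult_le_pos. lra. left; apply Rinv_0_lt_compat; lra.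
    apply Rmult_le_reg_r with (b - a). lra.
    unfold Rdiv. rewrite Rmult_assoc, Rinv_l by lra. lra. }
  replace (f a + (f b - f a) / (b - a) * (x - a) - (g a + (g b - g a) / (b - a) * (x - a)))
    with ((1 - t) * (f a - g a) + t * (f b - g b)) by (unfold t; field; lra).
  apply Rabs_le_between in H1. apply Rabs_le_between in H2. apply Rabs_le_between. nra.
Qed.

Theorem mainTheorem6
  (d : R) (xs : nat -> R) (N : nat)
  (alpha : nat -> nat -> R -> R)
  (Ls : nat -> (R -> R) -> (R -> R))
  (L : (R -> R) -> (R -> R))
  (hd : 0 < d <= 1)
  (hpart : is_partition xs N)
  (halpha_cont : forall i r, (1 <= i <= N)%nat -> cont_on (xs 0%nat) (xs N) (alpha i r))
  (halpha_lt1 : Rbar_lt (alpha_norm_bar xs N alpha) (Finite 1))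
  (* each L_r : Lip_d(I) -> Lip_d(I), linear, fixing the endpoints *)
  (hLs_lip : forall r g, Lip d (xs 0%nat) (xs N) g -> Lip d (xs 0%nat) (xs N) (Ls r g))
  (hLs_lin : forall r c g h, Lip d (xs 0%nat) (xs N) g -> Lip d (xs 0%nat) (xs N) h ->
     forall x, inI (xs 0%nat) (xs N) x ->
       Ls r (fun y => c * g y + h y) x = c * Ls r g x + Ls r h x)
  (hLs_a : forall r g, Lip d (xs 0%nat) (xs N) g -> Ls r g (xs 0%nat) = g (xs 0%nat))
  (hLs_b : forall r g, Lip d (xs 0%nat) (xs N) g -> Ls r g (xs N) = g (xs N))
  (* sup_r ||L_r||_oo < oo *)
  (hLs_bdd : exists M, forall r g, Lip d (xs 0%nat) (xs N) g ->
     supn (xs 0%nat) (xs N) (Ls r g) <= M * supn (xs 0%nat) (xs N) g)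
  (* L : Lip_d(I) -> Lip_d(I) linear with ||L f|| = sup_r ||L_r f|| *)
  (hL_lip : forall g, Lip d (xs 0%nat) (xs N) g -> Lip d (xs 0%nat) (xs N) (L g))
  (hL_lin : forall c g h, Lip d (xs 0%nat) (xs N) g -> Lip d (xs 0%nat) (xs N) h ->
     forall x, inI (xs 0%nat) (xs N) x ->
       L (fun y => c * g y + h y) x = c * L g x + L h x)
  (hL_sup : forall g, Lip d (xs 0%nat) (xs N) g ->
     Finite (supn (xs 0%nat) (xs N) (L g)) =
     Lub_Rbar (fun y => exists r : nat, y = supn (xs 0%nat) (xs N) (Ls r g))) :
  forall (f g phif phig : R -> R),
    Lip d (xs 0%nat) (xs N) f -> Lip d (xs 0%nat) (xs N) g ->
    is_ns_fractal xs N alpha f (fun r => Ls r f) phif ->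
    is_ns_fractal xs N alpha g (fun r => Ls r g) phig ->
    supn (xs 0%nat) (xs N) (fun x => phif x - phig x)
    <= 1 / (1 - alpha_norm xs N alpha) * supn (xs 0%nat) (xs N) (fun x => f x - g x)
       + alpha_norm xs N alpha / (1 - alpha_norm xs N alpha)
         * supn (xs 0%nat) (xs N) (fun x => L f x - L g x).
Proof.
  intros f g phif phig Hf Hg Hphif Hphig.
  pose proof (proj1 hpart) as HN1.
  assert (Hab : xs 0%nat < xs N) by (apply (part_mono xs N hpart); lia).
  set (a0 := xs 0%nat) in *. set (b0 := xs N) in *.
  assert (Halpha : exists a, alpha_norm xs N alpha = a /\ 0 <= a < 1 /\
    forall r i y, (1 <= i <= N)%nat -> inI a0 b0 y -> Rabs (alpha i r y) <= a).
  { unfold alpha_norm, alpha_norm_bar in *.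
    destruct (Lub_Rbar_correct (fun y => exists r : nat,
      y = maxi N (fun i => supn a0 b0 (alpha i r)))) as [Hub _].
    assert (Hmi : forall r i, (1 <= i <= N)%nat ->
       supn a0 b0 (alpha i r) <= maxi N (fun i => supn a0 b0 (alpha i r))).
    { intros r i Hi. unfold maxi. apply (fold_max_ub (fun i => supn a0 b0 (alpha i r))).
      apply in_seq. lia. }
    assert (H0 := Hub _ (ex_intro _ 0%nat eq_refl)).
    assert (Hs0 := Hmi 0%nat 1%nat ltac:(lia)).
    assert (Hg0 := supn_ge0 a0 b0 (alpha 1%nat 0%nat) ltac:(lra)).
    destruct (Lub_Rbar _) as [a| |]; simpl in *; try tauto.
    exists a. split. auto. split. lra.
    intros r i y Hi Hy.
    eapply Rle_trans. apply (supn_ub a0 b0). apply cont_bnd. lra. apply halpha_cont; auto. auto.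
    eapply Rle_trans. apply Hmi; auto. apply (Hub _ (ex_intro _ r eq_refl)). }
  destruct Halpha as [a [-> [Ha Hal]]].
  set (D := supn a0 b0 (fun x => f x - g x)).
  set (E := supn a0 b0 (fun x => L f x - L g x)).
  assert (HD0 : 0 <= D) by (apply supn_ge0; lra).
  assert (HE0 : 0 <= E) by (apply supn_ge0; lra).
  assert (HD : forall y, inI a0 b0 y -> Rabs (f y - g y) <= D).
  { intros y Hy. apply (supn_ub a0 b0 (fun x => f x - g x)); auto. apply bnd_sub; apply (lip_bnd d); auto; lra; lra. }
  assert (HE : forall r y, inI a0 b0 y -> Rabs (Ls r f y - Ls r g y) <= E).
  { intros r y Hy.
    set (h := fun y => -1 * g y + f y).
    assert (Hh : Lip d a0 b0 h) by (apply lip_comb; auto).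
    replace (Ls r f y - Ls r g y) with (Ls r h y)
      by (unfold h; rewrite (hLs_lin r (-1) g f Hg Hf y Hy); ring).
    eapply Rle_trans. apply (supn_ub a0 b0 (Ls r h)); auto. apply (lip_bnd d); try lra. apply hLs_lip; auto.
    assert (Hsup : supn a0 b0 (Ls r h) <= supn a0 b0 (L h)).
    { destruct (Lub_Rbar_correct (fun y => exists r : nat, y = supn a0 b0 (Ls r h))) as [Hub _].
      assert (H1 := Hub _ (ex_intro _ r eq_refl)). rewrite <- hL_sup in H1 by auto. exact H1. }
    eapply Rle_trans. apply Hsup. right. unfold E, supn. f_equal. apply Lub_Rbar_eqset.
    intros z. split; intros [w [Hw ->]]; exists w; split; auto;
      unfold h; rewrite (hL_lin (-1) g f Hg Hf w Hw); f_equal; ring. }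
  set (C := (D + a * E) / (1 - a)).
  assert (HC0 : 0 <= C) by (unfold C; apply Rmult_le_pos; [nra| left; apply Rinv_0_lt_compat; lra]).
  assert (HCe : C - a * C = D + a * E) by (unfold C; field; lra).
  assert (Hstep : forall r h1 h2, (forall y, inI a0 b0 y -> Rabs (h1 y - h2 y) <= C) ->
    forall x, inI a0 b0 x ->
    Rabs (Tmap xs N alpha f (fun r => Ls r f) r h1 x - Tmap xs N alpha g (fun r => Ls r g) r h2 x) <= C).
  { intros r h1 h2 Hh x Hx. unfold Tmap. cbv zeta.
    destruct (seg_spec xs N x hpart Hx) as [Hi _].
    pose proof (Q_in xs N x hpart Hx) as HQ.
    set (i := seg xs N x) in *. set (y := Qmap xs N i x) in *.
    replace (f x + alpha i r y * (h1 y - Ls r f y) - (g x + alpha i r y * (h2 y - Ls r g y)))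
      with ((f x - g x) + alpha i r y * ((h1 y - h2 y) - (Ls r f y - Ls r g y))) by ring.
    eapply Rle_trans. apply Rabs_triang. rewrite Rabs_mult.
    assert (H1 : Rabs (h1 y - h2 y - (Ls r f y - Ls r g y)) <= C + E).
    { eapply Rle_trans. apply Rabs_triang. rewrite Rabs_Ropp.
      specialize (Hh y HQ). specialize (HE r y HQ). lra. }
    assert (H2 : Rabs (alpha i r y) * Rabs (h1 y - h2 y - (Ls r f y - Ls r g y)) <= a * (C + E)).
    { apply Rmult_le_compat; auto using Rabs_pos. }
    specialize (HD x Hx). nra. }
  assert (Hiter : forall n h1 h2, (forall y, inI a0 b0 y -> Rabs (h1 y - h2 y) <= C) ->
    forall x, inI a0 b0 x ->
    Rabs (Tcomp xs N alpha f (fun r => Ls r f) n h1 x - Tcomp xs N alpha g (fun r => Ls r g) n h2 x) <= C).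
  { induction n as [|n IH]; intros h1 h2 Hh x Hx; simpl. auto.
    all: try (apply IH; auto; intros y Hy; apply Hstep; auto). }
  assert (Hstart : forall y, inI a0 b0 y -> Rabs (interp a0 b0 f y - interp a0 b0 g y) <= C).
  { intros y Hy. eapply Rle_trans. apply interp_diff; auto; apply HD; unfold inI; lra.
    assert (D <= C). { unfold C. apply Rmult_le_reg_r with (1 - a). lra.
      unfold Rdiv. rewrite Rmult_assoc, Rinv_l by lra. nra. } lra. }
  replace (1 / (1 - a) * D + a / (1 - a) * E) with C by (unfold C; field; lra).
  apply supn_le; auto. intros x Hx.
  destruct (Rle_lt_dec (Rabs (phif x - phig x)) C) as [Hle|Hlt]; auto.
  set (eps := (Rabs (phif x - phig x) - C) / 2).
  assert (Heps : 0 < eps) by (unfold eps; lra).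
  destruct (Hphif _ (interp_Cf a0 b0 f Hab) eps Heps) as [M1 HM1].
  destruct (Hphig _ (interp_Cf a0 b0 g Hab) eps Heps) as [M2 HM2].
  specialize (HM1 (max M1 M2) ltac:(lia) x Hx).
  specialize (HM2 (max M1 M2) ltac:(lia) x Hx).
  specialize (Hiter (max M1 M2) _ _ Hstart x Hx).
  set (u := Tcomp xs N alpha f (fun r => Ls r f) (max M1 M2) (interp a0 b0 f) x) in *.
  set (v := Tcomp xs N alpha g (fun r => Ls r g) (max M1 M2) (interp a0 b0 g) x) in *.
  assert (Rabs (phif x - phig x) <= Rabs (u - phif x) + Rabs (u - v) + Rabs (v - phig x)).
  { replace (phif x - phig x) with (- (u - phif x) + (u - v) + (v - phig x)) by ring.
    eapply Rle_trans. apply Rabs_triang. rewrite <- Rabs_Ropp with (u - phif x).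
    pose proof (Rabs_triang (- (u - phif x)) (u - v)). lra. }
  unfold eps in *. lra.
Qed.
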